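(* Let $r,n\ge2$, $\pi=A_1\cdots A_n\in\mathbb{S}_{2rn}$ with $A_j=(2r(j-1)+1\ \cdots\ 2rj)$, and $\mathcal{C}$ its conjugacy class. Let $t\in\mathcal{C}$ with $t\pi=\pi t$ and $g\in\mathbb{S}_{2rn}$ with $g\pi g^{-1}=t$. Write $t=A_1^{d_1}\cdots A_n^{d_n}B$ and $g^{-1}\pi g=A_1^{e_1}\cdots A_n^{e_n}B'$ with $0\le d_j,e_j\le 2r-1$ and $B,B'\in\langle B_1,\dots,B_{n-1}\rangle$. (a) If $n$ is odd, then $\sum_{j=1}^n(e_j+d_j)$ is even. (b) If $r$ and $n$ are both even, then $\sum_{j=1}^n(e_j+d_j)\equiv0\pmod 4$.
   Context: Permutations are composed right to left. $B_i$ ($1\le i\le n-1$) is the involution exchanging $2r(i-1)+m\leftrightarrow 2ri+m$ for $1\le m\le 2r$. The centralizer of $\pi$ is $\mathbb{S}_{2rn}^\pi=\langle A_1,\dots,A_n\rangle\rtimes\langle B_1,\dots,B_{n-1}\rangle\cong\mathbb{Z}_{2r}^n\rtimes\mathbb{S}_n$, so every element of it is uniquely written $A_1^{d_1}\cdots A_n^{d_n}B$ with $0\le d_j\le 2r-1$ and $B\in\langle B_1,\dots,B_{n-1}\rangle$; both $t$ and $g^{-1}\pi g$ lie in this centralizer. *)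

(* Defs.v *)
From mathcomp Require Import all_boot all_order all_fingroup.
From mathcomp Require Import zify.
Set Implicit Arguments. Unset Strict Implicit. Unset Printing Implicit Defensive.

(* Points of {1,...,2rn} are represented 0-based by 'I_(2*r*n): the point
   (paper) 2r*b + o + 1  (block b in [0,n), offset o in [0,2r)) is the
   ordinal with value b*(2r) + o.

   MathComp composes permutations LEFT TO RIGHT: (s * t)%g x = t (s x).
   The paper composes right to left, so the paper's product  s t  is
   MathComp's  (t * s)%g . *)

Definition blk_act (K n : nat) (bf : nat -> nat) (f : nat -> nat -> nat)
  (x : 'I_(K * n)) : 'I_(K * n) :=
  insubd x (bf (x %/ K) * K + f (x %/ K) (x %% K)).
Arguments blk_act : clear implicits.

Lemma blk_act_inj (K n : nat) (bf : nat -> nat) (f : nat -> nat -> nat) :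
  (forall b, b < n -> bf b < n) ->
  (forall b c, b < n -> c < n -> bf b = bf c -> b = c) ->
  (forall b o, o < K -> f b o < K) ->
  (forall b o p, o < K -> p < K -> f b o = f b p -> o = p) ->
  injective (blk_act K n bf f).
Proof.
move=> bfn bfi fK fi.
have key : forall x : 'I_(K * n), [/\ 0 < K, x %/ K < n, x %% K < K &
    val (blk_act K n bf f x) = bf (x %/ K) * K + f (x %/ K) (x %% K)].
  move=> x; have xlt := ltn_ord x.
  have K0 : 0 < K by case: K x xlt {fK fi} => //.
  have xb : x %/ K < n by rewrite ltn_divLR // [n * K]mulnC.
  have xo : x %% K < K by rewrite ltn_pmod.
  split=> //; rewrite /blk_act val_insubd.
  have -> : bf (x %/ K) * K + f (x %/ K) (x %% K) < K * n.
    have := bfn _ xb; have := fK (x %/ K) _ xo => h1 h2.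
    apply: (@leq_trans ((bf (x %/ K)).+1 * K)); first by rewrite mulSn addnC ltn_add2r.
    by rewrite mulnC leq_mul2l h2 orbT.
  by [].
move=> x y; case: (key x) => K0 xb xo vx; case: (key y) => _ yb yo vy exy.
have e : bf (x %/ K) * K + f (x %/ K) (x %% K) = bf (y %/ K) * K + f (y %/ K) (y %% K)
  by rewrite -vx -vy exy.
have eb : bf (x %/ K) = bf (y %/ K).
  move/(congr1 (divn^~ K)): e.
  by rewrite !divnMDl // (divn_small (fK _ _ xo)) (divn_small (fK _ _ yo)) !addn0.
have bxy := bfi _ _ xb yb eb.
have eo : f (x %/ K) (x %% K) = f (y %/ K) (y %% K).
  by move/(congr1 (modn^~ K)): e; rewrite !modnMDl (modn_small (fK _ _ xo)) (modn_small (fK _ _ yo)).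
rewrite -bxy in eo; have oxy := fi _ _ _ xo yo eo.
by apply: val_inj; rewrite /= (divn_eq x K) (divn_eq y K) bxy oxy.
Qed.

Section Perms.
Variables r n : nat.

(* A_(j+1) of the paper (j : 'I_n, 0-based): the 2r-cycle
   (2rj+1 2rj+2 ... 2r(j+1)) : rotates the offsets in block j by +1. *)
Definition cycA_bf (b : nat) := b.
Definition cycA_f (j : nat) (b o : nat) := if b == j then o.+1 %% (2 * r) else o.

Lemma cycA_inj (j : 'I_n) : injective (blk_act (2 * r) n cycA_bf (cycA_f j)).
Proof.
apply: blk_act_inj => //.
- move=> b o oK; rewrite /cycA_f; case: ifP => // _; rewrite ltn_pmod //.
  by case: (2 * r) oK.
- move=> b o p oK pK; rewrite /cycA_f; case: ifP => // _.
  have K0 : 0 < 2 * r by case: (2 * r) oK.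
  move: oK pK; rewrite leq_eqVlt => /orP[/eqP ho|ho];
    rewrite leq_eqVlt => /orP[/eqP hp|hp].
  + by move: ho hp; lia.
  + by rewrite ho modnn modn_small.
  + by rewrite hp modnn modn_small.
  + by rewrite !modn_small //; case.
Qed.

Definition cycA (j : 'I_n) : {perm 'I_(2 * r * n)} := perm (@cycA_inj j).

(* B_i of the paper (1 <= i <= n-1), for i : 'I_n: exchanges
   2r(i-1)+m <-> 2ri+m for 1 <= m <= 2r, i.e. swaps blocks i-1 and i
   preserving offsets.  (For i = 0 it is the identity; it is only used
   with 0 < i.) *)
Definition swB_bf (i : nat) (b : nat) :=
  if b == i.-1 then i else if b == i then i.-1 else b.
Definition swB_f (b o : nat) := o.

Lemma swB_inj (i : 'I_n) : injective (blk_act (2 * r) n (swB_bf i) swB_f).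
Proof.
have ilt := ltn_ord i.
apply: blk_act_inj => //.
- by move=> b bn; rewrite /swB_bf; case: ifP => _; [|case: ifP] => //; lia.
- move=> b c _ _; rewrite /swB_bf.
  by case: (b =P i.-1); case: (b =P i); case: (c =P i.-1); case: (c =P i); lia.
Qed.

Definition swB (i : 'I_n) : {perm 'I_(2 * r * n)} := perm (@swB_inj i).

(* pi = A_1 ... A_n (the A_j commute, so the order is immaterial). *)
Definition piPerm : {perm 'I_(2 * r * n)} := (\prod_(j < n) cycA j)%g.

Definition Bgrp : {set {perm 'I_(2 * r * n)}} :=
  <<[set swB i | i in [pred i : 'I_n | 0 < i]]>>%g.

End Perms.

(* Main.v *)
Require Import Defs.
From mathcomp Require Import all_boot all_order all_fingroup.
From mathcomp Require Import zify.
Set Implicit Arguments. Unset Strict Implicit. Unset Printing Implicit Defensive.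

Lemma modS a m : (a %% m).+1 %% m = a.+1 %% m.
Proof. by rewrite -addn1 modnDml addn1. Qed.

Lemma dvd_of_mod K l a b : l %| K -> l %| b -> a = b %[mod K] -> l %| a.
Proof.
move=> lK lb e; rewrite /dvdn -(modn_dvdm a lK) e (modn_dvdm b lK).
exact: lb.
Qed.

Lemma NT K l l2 s s2 : 0 < K -> 0 < l -> 0 < l2 -> l %| K -> l2 %| K ->
  l %| s -> l2 %| s2 -> l %| s2 -> l2 %| s ->
  l2 = (s2 %/ l) * s %[mod K] -> l = (s %/ l2) * s2 %[mod K] ->
  l = l2 /\ (s %/ l) * (s2 %/ l) = 1 %[mod K %/ l].
Proof.
move=> K0 l0 l20 lK l2K ls l2s2 ls2 l2s e1 e2.
have d1 : l %| l2 by apply: dvd_of_mod lK _ e1; exact: dvdn_mull.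
have d2 : l2 %| l by apply: dvd_of_mod l2K _ e2; exact: dvdn_mull.
have ell : l = l2 by apply/eqP; rewrite eqn_dvd d1 d2.
split => //; subst l2.
move: lK ls ls2 e2 => /dvdnP[M eK] /dvdnP[j ->] /dvdnP[m ->]; subst K.
rewrite !mulnK // => e2.
apply/eqP; rewrite -(eqn_pmul2l l0) !muln_modr [l * M]mulnC.
by rewrite muln1 e2; apply/eqP; congr (_ %% _); lia.
Qed.

Lemma mod4_aux a b : a < 4 -> b < 4 -> (a * b) %% 4 = 1 -> (a + b + 2) %% 4 = 0.
Proof. by move: a b => [|[|[|[|a]]]] [|[|[|[|b]]]]. Qed.

Lemma AL K l j j2 : 0 < K -> l %| K -> j * j2 = 1 %[mod K %/ l] ->
  (2 %| K -> 2 %| l * (j + j2)) /\ (4 %| K -> 4 %| l * (j + j2 + 2)).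
Proof.
move=> K0 /dvdnP[M eK]; subst K.
have l0 : 0 < l by move: K0; rewrite muln_gt0; case/andP.
rewrite mulnK // => e.
have modd : forall d, 1 < d -> d %| M -> (j * j2) %% d = 1.
  move=> d d1 dM; rewrite -(modn_dvdm _ dM) e (modn_dvdm _ dM) modn_small //.
have oddjj : 2 %| M -> odd j /\ odd j2.
  move=> hM; have := modd 2 isT hM; rewrite modn2 oddM => /eqP.
  by case: (odd j); case: (odd j2).
split.
- rewrite !dvdn2 !oddM negb_and => /orP[hM|hl]; last by rewrite (negbTE hl).
  have [oj oj2] := oddjj ltac:(by rewrite dvdn2); by rewrite oddD oj oj2 andbF.
- move=> h4; case: (boolP (odd l)) => [ol|el].
  + have hM : 4 %| M.
      have c4 : coprime 4 l by rewrite (@coprime_pexpl 2 2 l) // coprime2n ol.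
      by rewrite -(Gauss_dvdl M c4).
    have := modd 4 isT hM; rewrite -modnMml -modnMmr => h.
    have := mod4_aux (ltn_pmod j (isT : 0 < 4)) (ltn_pmod j2 (isT : 0 < 4)) h.
    move=> h'; apply: dvdn_mull; apply/eqP; lia.
  + case: (boolP (4 %| l)) => [hl|hl]; first exact: dvdn_mulr.
    have [l' el'] : exists l', l = 2 * l' by exists l./2; move: el; rewrite -dvdn2; lia.
    subst l.
    have ol' : odd l' by move: hl; rewrite (_ : 4 = 2 * 2) // dvdn_pmul2l // dvdn2 negbK.
    have hM : 2 %| M.
      move: h4; rewrite (_ : 4 = 2 * 2) // mulnCA dvdn_pmul2l // dvdn2 oddM ol' andbT.
      by rewrite dvdn2.
    have [oj oj2] := oddjj hM.
    have ev : 2 %| j + j2 + 2 by rewrite dvdn2 !oddD oj oj2.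
    by case/dvdnP: ev => k ->; apply/dvdnP; exists (l' * k); lia.
Qed.

Lemma arith_div K L s : 0 < K -> 0 < L -> L %| K -> L %| s ->
  (K %/ L * s) %/ K = s %/ L.
Proof.
move=> K0 L0 /dvdnP[M eK] /dvdnP[j ->]; subst K.
rewrite mulnK // mulnK // mulnA [M * j]mulnC -mulnA mulnK //.
Qed.

Section Orb.
Variable (I : finType) (s : {perm I}).

Lemma porbitX (b : I) : (s ^+ #|porbit s b|)%g b = b.
Proof. by rewrite permX iter_porbit. Qed.

Lemma porbit_dvd (b : I) a : (s ^+ a)%g b = b -> #|porbit s b| %| a.
Proof.
move=> h; set L := #|porbit s b|.
have L0 : 0 < L by rewrite lt0n card_porbit_neq0.
have hL : forall q, (s ^+ (q * L))%g b = b.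
  elim=> [|q IH]; first by rewrite mul0n expg0 perm1.
  by rewrite mulSn expgD permM porbitX IH.
have hr : (s ^+ (a %% L))%g b = b.
  by move: h; rewrite {1}(divn_eq a L) expgD permM hL.
have := uniq_traject_porbit s b; rewrite -/L => U.
have lt : a %% L < L by rewrite ltn_pmod.
have : nth b (traject s b L) (a %% L) = nth b (traject s b L) 0.
  by rewrite !nth_traject // -permX hr.
by move/eqP; rewrite nth_uniq ?size_traject.
Qed.

Lemma const_orbit (f : I -> nat) : (forall b, f (s b) = f b) ->
  forall i b, f ((s ^+ i)%g b) = f b.
Proof.
move=> hf; elim=> [|i IH] b; first by rewrite expg0 perm1.
by rewrite expgSr permM hf IH.
Qed.

Lemma orbit_sum_dvd (f : I -> nat) m : (forall b, f (s b) = f b) ->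
  (forall b, m %| #|porbit s b| * f b) -> m %| \sum_b f b.
Proof.
move=> hf hm.
rewrite (partition_big_imset (porbit s)) /=.
apply: dvdn_sum => O /imsetP[b0 _ ->].
have -> : \sum_(i in predT | porbit s i == porbit s b0) f i =
          \sum_(i in porbit s b0) f b0.
  apply: eq_big => i; first by rewrite /= eq_porbit_mem.
  move=> /andP[_]; rewrite eq_porbit_mem => /porbitP[k ->].
  by rewrite const_orbit.
by rewrite sum_nat_const.
Qed.
End Orb.

Section Main.
Variables r n : nat.
Variable hr : 0 < r.
Local Notation K := (2 * r).
Local Notation T := 'I_(2 * r * n).

Lemma K0 : 0 < K. Proof. lia. Qed.

Lemma blk_lt (p : T) : p %/ K < n.
Proof. have := ltn_ord p; rewrite ltn_divLR ?K0 // => h; lia. Qed.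

Definition blkO (p : T) : 'I_n := Ordinal (blk_lt p).

Lemma mkpt_lt (b : 'I_n) o : b * K + o %% K < 2 * r * n.
Proof.
have := ltn_ord b; have := ltn_pmod o K0 => h1 h2.
apply: (@leq_trans ((b.+1) * K)); first by rewrite mulSn addnC ltn_add2r.
by rewrite mulnC leq_mul2l h2 orbT.
Qed.

Definition mkpt (b : 'I_n) (o : nat) : T := Ordinal (mkpt_lt b o).

Lemma mkpt_blk b o : blkO (mkpt b o) = b.
Proof.
apply: val_inj => /=; rewrite divnMDl ?K0 // divn_small ?addn0 //.
exact: ltn_pmod K0.
Qed.

Lemma mkpt_off b o : (mkpt b o) %% K = o %% K.
Proof. by rewrite /= modnMDl modn_mod. Qed.

Lemma ptE (p : T) : p = mkpt (blkO p) (p %% K).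
Proof. by apply: val_inj; rewrite /= modn_mod -divn_eq. Qed.

Lemma pt_eq (p q : T) : blkO p = blkO q -> p %% K = q %% K -> p = q.
Proof. by move=> h1 h2; rewrite (ptE p) (ptE q) h1 h2. Qed.

Lemma mkpt_mod b o : mkpt b (o %% K) = mkpt b o.
Proof. by apply: val_inj; rewrite /= modn_mod. Qed.

Lemma mkpt_modD b a c : mkpt b (a %% K + c) = mkpt b (a + c).
Proof. by apply: val_inj; rewrite /= modnDml. Qed.

Lemma cycAE (j : 'I_n) (p : T) :
  cycA r j p = if blkO p == j then mkpt (blkO p) (p %% K).+1 else p.
Proof.
rewrite /cycA permE; apply: val_inj.
rewrite /blk_act val_insubd /cycA_bf /cycA_f.
have -> : (p %/ K == j) = (blkO p == j) by [].
have H1 := mkpt_lt (blkO p) (p %% K).+1.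
have H2 := mkpt_lt (blkO p) (p %% K); rewrite modn_mod in H2.
case: (blkO p == j); rewrite /=.
  by rewrite H1.
by rewrite H2 -divn_eq.
Qed.

Lemma cycAXE (j : 'I_n) k (p : T) :
  (cycA r j ^+ k)%g p = if blkO p == j then mkpt (blkO p) (p %% K + k) else p.
Proof.
elim: k p => [|k IH] p.
  by rewrite expg0 perm1; case: ifP => // _; rewrite addn0 -ptE.
rewrite expgSr permM IH; case: (eqVneq (blkO p) j) => [e|ne].
  rewrite cycAE mkpt_blk e eqxx mkpt_off; apply: val_inj => /=.
  by rewrite modS addnS.
by rewrite cycAE (negbTE ne).
Qed.

Lemma prodA_seq (f : 'I_n -> nat) (s : seq 'I_n) (p : T) :
  (\prod_(j <- s) cycA r j ^+ f j)%g p =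
  mkpt (blkO p) (p %% K + count_mem (blkO p) s * f (blkO p)).
Proof.
elim: s p => [|a s IH] p.
  by rewrite big_nil perm1 addn0 -ptE.
rewrite big_cons permM cycAXE; case: (eqVneq (blkO p) a) => [e|ne].
  rewrite IH mkpt_blk mkpt_off -e /= mkpt_modD eqxx.
  by congr mkpt; rewrite /=; lia.
by rewrite IH /= eq_sym (negbTE ne).
Qed.

Lemma prodA_E (f : 'I_n -> nat) (p : T) :
  (\prod_(j < n) cycA r j ^+ f j)%g p = mkpt (blkO p) (p %% K + f (blkO p)).
Proof.
rewrite prodA_seq /index_enum -enumT.
by rewrite count_uniq_mem ?enum_uniq // mem_enum mul1n.
Qed.


Local Notation x := (piPerm r n).

Lemma xE (p : T) : x p = mkpt (blkO p) (p %% K + 1).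
Proof.
rewrite /piPerm -(prodA_E (fun _ => 1)); congr (fun_of_perm _ p).
Qed.

Lemma xXE a (p : T) : (x ^+ a)%g p = mkpt (blkO p) (p %% K + a).
Proof.
elim: a p => [|a IH] p; first by rewrite expg0 perm1 addn0 -ptE.
rewrite expgSr permM IH xE mkpt_blk mkpt_off mkpt_modD; congr mkpt; lia.
Qed.

Lemma xK : (x ^+ K)%g = 1%g.
Proof.
apply/permP => p; rewrite xXE perm1; apply: pt_eq; first exact: mkpt_blk.
by rewrite mkpt_off modnDr modn_mod.
Qed.

Lemma swB_off (i : 'I_n) (p : T) : swB r i p %% K = p %% K.
Proof.
rewrite /swB permE /blk_act val_insubd /swB_f.
by case: ifP => // _; rewrite modnMDl modn_mod.
Qed.

Lemma Bgrp_off (w : {perm T}) : w \in Bgrp r n -> forall p, w p %% K = p %% K.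
Proof.
move=> /gen_prodgP[m [c cA ->]].
apply: (big_ind (fun w : {perm T} => forall p, w p %% K = p %% K)).
- by move=> p; rewrite perm1.
- by move=> w1 w2 h1 h2 p; rewrite permM h2 h1.
move=> i _; have := cA i => /imsetP[j _ ->]; exact: swB_off.
Qed.


Section Comm.
Variable z : {perm T}.
Variable hz : commute z x.

Lemma comXE a (p : T) : z ((x ^+ a)%g p) = (x ^+ a)%g (z p).
Proof. by have := commuteX a hz => /(congr1 (fun w => fun_of_perm w p)); rewrite !permM. Qed.

Definition sgf (b : 'I_n) : 'I_n := blkO (z (mkpt b 0)).
Definition cf (b : 'I_n) : nat := z (mkpt b 0) %% K.

Lemma base_shift (p : T) : p = (x ^+ (p %% K))%g (mkpt (blkO p) 0).
Proof. by rewrite xXE mkpt_blk mkpt_off mod0n add0n -ptE. Qed.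

Lemma zE0 (p : T) : z p = mkpt (sgf (blkO p)) (p %% K + cf (blkO p)).
Proof.
rewrite {1}(base_shift p) comXE xXE /sgf /cf; congr mkpt; lia.
Qed.

Lemma sgf_inj : injective sgf.
Proof.
move=> b b' e.
pose o := (cf b + K - cf b') %% K.
have : z (mkpt b' o) = z (mkpt b 0).
  rewrite !zE0 !mkpt_blk e; apply: pt_eq; rewrite ?mkpt_blk //.
  rewrite !mkpt_off mod0n add0n modnDml /o modnDml.
  have h : cf b' < K by rewrite /cf ltn_pmod ?K0.
  have -> : cf b + K - cf b' + cf b' = cf b + K by lia.
  by rewrite modnDr.
by move/perm_inj/(congr1 blkO); rewrite !mkpt_blk.
Qed.

Definition sg : {perm 'I_n} := perm sgf_inj.

Lemma zE (p : T) : z p = mkpt (sg (blkO p)) (p %% K + cf (blkO p)).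
Proof. by rewrite permE zE0. Qed.

Definition S k (b : 'I_n) := \sum_(i < k) cf ((sg ^+ i)%g b).

Lemma zXE k (p : T) :
  (z ^+ k)%g p = mkpt ((sg ^+ k)%g (blkO p)) (p %% K + S k (blkO p)).
Proof.
elim: k p => [|k IH] p.
  by rewrite !expg0 !perm1 /S big_ord0 addn0 -ptE.
rewrite expgSr permM IH zE mkpt_blk mkpt_off mkpt_modD expgSr permM.
by congr mkpt; rewrite /S big_ord_recr /= addnA.
Qed.

Lemma S_add a b (c : 'I_n) : S (a + b) c = S a c + S b ((sg ^+ a)%g c).
Proof.
rewrite /S big_split_ord /=; congr (_ + _).
by apply: eq_bigr => i _; rewrite expgD permM.
Qed.


Lemma S_mul L m (c : 'I_n) : (sg ^+ L)%g c = c -> S (m * L) c = m * S L c.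
Proof.
move=> h; elim: m => [|m IH]; first by rewrite mul0n /S big_ord0.
rewrite mulSn S_add h IH; lia.
Qed.

Variable zKid : (z ^+ K)%g = 1%g.

Lemma sgK (c : 'I_n) : (sg ^+ K)%g c = c.
Proof.
have := zXE K (mkpt c 0); rewrite zKid perm1 mkpt_blk.
by move/(congr1 blkO); rewrite !mkpt_blk.
Qed.

Lemma SK_dvd (c : 'I_n) : K %| S K c.
Proof.
have := zXE K (mkpt c 0); rewrite zKid perm1 mkpt_blk.
move/(congr1 (fun q : T => q %% K)); rewrite /= !mkpt_off mod0n add0n.
by move/esym => /eqP.
Qed.

Definition Lo (c : 'I_n) := #|porbit sg c|.

Lemma Lo_gt0 c : 0 < Lo c.
Proof. by rewrite lt0n card_porbit_neq0. Qed.

Lemma Lo_dvdK c : Lo c %| K.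
Proof. exact: porbit_dvd (sgK c). Qed.

Lemma SK_eq c : S K c = (K %/ Lo c) * S (Lo c) c.
Proof. by rewrite -S_mul ?porbitX // divnK // Lo_dvdK. Qed.

Lemma Lo_dvdS c : Lo c %| S (Lo c) c.
Proof.
have h := SK_dvd c; rewrite SK_eq in h.
have hL := Lo_dvdK c; have L0 := Lo_gt0 c.
move: h; rewrite -{1}(divnK hL) [_ * Lo c]mulnC [K %/ _ * _]mulnC dvdn_pmul2r //.
by rewrite divn_gt0 // dvdn_leq // K0.
Qed.

Definition jf (c : 'I_n) := S K c %/ K.

Lemma jf_eq c : jf c = S (Lo c) c %/ Lo c.
Proof.
rewrite /jf SK_eq; apply: arith_div; [exact: K0|exact: Lo_gt0|exact: Lo_dvdK|exact: Lo_dvdS].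
Qed.

Lemma jf_sg c : jf (sg c) = jf c.
Proof.
rewrite /jf; congr (_ %/ _).
have h1 := S_add 1 K c; have h2 := S_add K 1 c.
rewrite sgK in h2; rewrite expg1 [1 + K]addnC h2 in h1.
have e1 : S 1 c = cf c by rewrite /S big_ord1 expg0 perm1.
rewrite e1 in h1; lia.
Qed.

Lemma sum_cf_jf : \sum_c cf c = \sum_c jf c.
Proof.
apply/eqP; rewrite -(eqn_pmul2l K0); apply/eqP.
have -> : K * \sum_c jf c = \sum_c S K c.
  rewrite big_distrr /=; apply: eq_bigr => c _.
  by rewrite /jf mulnC divnK // SK_dvd.
rewrite /S exchange_big /=.
rewrite -[in LHS](card_ord K) -sum_nat_const; apply: eq_bigr => i _.
by rewrite (reindex_inj (perm_inj (s := (sg ^+ i)%g))).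
Qed.

End Comm.


Lemma BL (G : 'I_n -> nat) : \sum_(p : T) G (blkO p) = K * \sum_b G b.
Proof.
have hK := K0.
pose offO (p : T) : 'I_K := Ordinal (ltn_pmod p hK).
rewrite (reindex (fun bo : 'I_n * 'I_K => mkpt bo.1 bo.2)) /=; last first.
  exists (fun p => (blkO p, offO p)) => [[b o] _ | p _] /=.
    congr (_, _); first exact: mkpt_blk.
    by apply: val_inj; rewrite /= mkpt_off modn_small.
  by rewrite -ptE.
rewrite -(pair_big predT predT (fun b (o : 'I_K) => G (blkO (mkpt b o)))) /=.
rewrite big_distrr /=; apply: eq_bigr => b _.
under eq_bigr do rewrite mkpt_blk.
by rewrite sum_nat_const card_ord.
Qed.

Section Pair.
Variables y u g : {perm T}.
Variable hy : commute y x.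
Variable hu : commute u x.
Variable Ryx : forall a q, (y ^+ a)%g (g q) = g ((x ^+ a)%g q).
Variable Rux : forall k q, g ((u ^+ k)%g q) = (x ^+ k)%g (g q).

Lemma L1 (q : T) :
  let b := blkO (g q) in let b' := blkO q in
  let l := Lo hy b in let l2 := Lo hu b' in
  l %| S hu l2 b' /\ l2 = (S hu l2 b' %/ l) * S hy l b %[mod K].
Proof.
move=> b b' l l2.
have E1 : (u ^+ l2)%g q = (x ^+ S hu l2 b')%g q.
  by rewrite zXE xXE porbitX.
have E2 : (x ^+ l2)%g (g q) = (y ^+ S hu l2 b')%g (g q).
  by rewrite -Rux E1 Ryx.
move: E2; rewrite xXE zXE -/b => E2.
have Eb : (sg hy ^+ S hu l2 b')%g b = b.
  by have := congr1 blkO E2; rewrite !mkpt_blk.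
have dv := porbit_dvd Eb; split => //.
rewrite Eb in E2.
have E3 := mkpt_off b (g q %% K + l2); rewrite E2 mkpt_off in E3.
move/eqP: E3; rewrite eqn_modDl => /eqP <-.
by rewrite -{1}(divnK dv) S_mul // porbitX.
Qed.


End Pair.

Section Pair2.
Variables y u g : {perm T}.
Variable hy : commute y x.
Variable hu : commute u x.
Variable Ryx : forall a q, (y ^+ a)%g (g q) = g ((x ^+ a)%g q).
Variable Rux : forall k q, g ((u ^+ k)%g q) = (x ^+ k)%g (g q).
Variable huK : (u ^+ K)%g = 1%g.
Variable hyK : (y ^+ K)%g = 1%g.

Lemma Ryx' a q : (u ^+ a)%g ((g^-1)%g q) = (g^-1)%g ((x ^+ a)%g q).
Proof. by apply: (@perm_inj _ g); rewrite Rux !permKV. Qed.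

Lemma Rux' k q : (g^-1)%g ((y ^+ k)%g q) = (x ^+ k)%g ((g^-1)%g q).
Proof. by rewrite -{1}(permKV g q) Ryx permK. Qed.

Definition jh (b : 'I_n) := jf hu (blkO ((g^-1)%g (mkpt b 0))).

Lemma jh_pt (p : T) : jf hu (blkO ((g^-1)%g p)) = jh (blkO p).
Proof.
rewrite {1}(base_shift p) -Ryx' zXE mkpt_blk /jh.
by rewrite (const_orbit (jf_sg hu huK)).
Qed.

Lemma jh_sg b : jh (sg hy b) = jh b.
Proof.
have e : sg hy b = blkO (y (mkpt b 0)) by rewrite zE mkpt_blk mkpt_blk.
rewrite e -jh_pt.
have := Rux' 1 (mkpt b 0); rewrite !expg1 => ->.
by rewrite xE mkpt_blk jh_pt mkpt_blk.
Qed.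

Lemma sum_jh : \sum_b jf hu b = \sum_b jh b.
Proof.
apply/eqP; rewrite -(eqn_pmul2l K0); apply/eqP.
rewrite -!BL (reindex_inj (perm_inj (s := g^-1%g))) /=.
by apply: eq_bigr => p _; rewrite jh_pt.
Qed.

Lemma key b : (2 %| K -> 2 %| Lo hy b * (jf hy b + jh b)) /\
              (4 %| K -> 4 %| Lo hy b * (jf hy b + jh b + 2)).
Proof.
set q := (g^-1)%g (mkpt b 0).
have gq : g q = mkpt b 0 by rewrite /q permKV.
have [h1 h2] := L1 hy hu Ryx Rux q; rewrite gq mkpt_blk in h1 h2.
have [h3 h4] := L1 hu hy Ryx' Rux' (mkpt b 0).
rewrite mkpt_blk -/q in h3 h4.
have [el ej] := NT K0 (Lo_gt0 hy b) (Lo_gt0 hu (blkO q)) (Lo_dvdK hy hyK b)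
  (Lo_dvdK hu huK (blkO q)) (Lo_dvdS hy hyK b) (Lo_dvdS hu huK (blkO q)) h1 h3 h2 h4.
have ej1 : jf hy b = S hy (Lo hy b) b %/ Lo hy b by rewrite (jf_eq hy hyK).
have ej2 : jh b = S hu (Lo hu (blkO q)) (blkO q) %/ Lo hy b by rewrite /jh -/q (jf_eq hu huK) el.
rewrite ej1 ej2; apply: AL => //; first exact: K0; first exact: Lo_dvdK hy hyK b.
Qed.

End Pair2.

Lemma cf_dec (z : {perm T}) (hz : commute z x) (w : {perm T}) (f : 'I_n -> nat) :
  w \in Bgrp r n -> (forall j, f j < K) ->
  z = (w * \prod_(j < n) cycA r j ^+ f j)%g -> forall b, cf z b = f (sg hz b).
Proof.
move=> wB fK ez b.
have e : z (mkpt b 0) = mkpt (blkO (w (mkpt b 0))) (f (blkO (w (mkpt b 0)))).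
  by rewrite ez permM prodA_E (Bgrp_off wB) mkpt_off mod0n.
rewrite /cf permE /sgf e mkpt_blk mkpt_off modn_small //.
Qed.

Lemma sum_cf (z : {perm T}) (hz : commute z x) (w : {perm T}) (f : 'I_n -> nat) :
  w \in Bgrp r n -> (forall j, f j < K) ->
  z = (w * \prod_(j < n) cycA r j ^+ f j)%g -> \sum_b f b = \sum_b cf z b.
Proof.
move=> wB fK ez; rewrite (reindex_inj (perm_inj (s := sg hz))) /=.
by apply: eq_bigr => b _; rewrite (cf_dec hz wB fK ez).
Qed.

End Main.

Unset Implicit Arguments.

Theorem lemma2p18 (r n : nat) (hr : 2 <= r) (hn : 2 <= n)
  (t g B B' : {perm 'I_(2 * r * n)}) (d e : 'I_n -> nat) :
  (* t lies in the conjugacy class of pi *)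
  t \in (piPerm r n ^: [set: {perm 'I_(2 * r * n)}])%g ->
  (* t pi = pi t *)
  (t * piPerm r n = piPerm r n * t)%g ->
  (* g pi g^-1 = t  (paper, right-to-left) *)
  t = (piPerm r n ^ g)%g ->
  (forall j, d j < 2 * r) -> (forall j, e j < 2 * r) ->
  B \in Bgrp r n -> B' \in Bgrp r n ->
  (* t = A_1^{d_1} ... A_n^{d_n} B  (paper, right-to-left) *)
  t = (B * \prod_(j < n) cycA r j ^+ d j)%g ->
  (* g^-1 pi g = A_1^{e_1} ... A_n^{e_n} B'  (paper, right-to-left) *)
  (piPerm r n ^ g^-1)%g = (B' * \prod_(j < n) cycA r j ^+ e j)%g ->
  (odd n -> ~~ odd (\sum_(j < n) (e j + d j))) /\
  (~~ odd r -> ~~ odd n -> 4 %| \sum_(j < n) (e j + d j)).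
Proof.
move=> _ tcomm tdef hd he hB hB' tB uB.
have hr0 : 0 < r by lia.
set u := (piPerm r n ^ g^-1)%g in uB.
have hy : commute t (piPerm r n) := tcomm.
have hu : commute u (piPerm r n).
  have := congr1 (conjg^~ (g^-1)%g) tcomm; rewrite /= !conjMg tdef conjgK => ee.
  exact: esym ee.
have Ryx : forall a q, (t ^+ a)%g (g q) = g ((piPerm r n ^+ a)%g q).
  by move=> a q; rewrite tdef -conjXg conjgE !permM permK.
have Rux : forall k q, g ((u ^+ k)%g q) = (piPerm r n ^+ k)%g (g q).
  by move=> k q; rewrite /u -conjXg conjgE invgK !permM permKV.
have tK : (t ^+ (2 * r))%g = 1%g by rewrite tdef -conjXg (xK n hr0) conj1g.
have uK : (u ^+ (2 * r))%g = 1%g by rewrite /u -conjXg (xK n hr0) conj1g.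
have Esum : \sum_(j < n) (e j + d j) =
    \sum_b (jf hr0 hy b + jh hr0 g hu b).
  rewrite big_split /= addnC big_split /=.
  rewrite (sum_cf hr0 hy hB hd tB) (sum_cf_jf hr0 hy tK).
  by rewrite (sum_cf hr0 hu hB' he uB) (sum_cf_jf hr0 hu uK) (sum_jh hr0 hu Rux uK).
have inv : forall b, jf hr0 hy (sg hr0 hy b) + jh hr0 g hu (sg hr0 hy b) =
                     jf hr0 hy b + jh hr0 g hu b.
  by move=> b; rewrite (jf_sg hr0 hy tK) (jh_sg hr0 hy hu Ryx Rux uK).
rewrite Esum; split.
- move=> _; rewrite -dvdn2; apply: (orbit_sum_dvd (s := sg hr0 hy)) => [b|b]; first exact: inv.
  by apply: (key hr0 hy hu Ryx Rux uK tK b).1; rewrite dvdn_mulr.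
- move=> er en.
  have h4 : 4 %| \sum_b (jf hr0 hy b + jh hr0 g hu b + 2).
    apply: (orbit_sum_dvd (s := sg hr0 hy)) => [b|b]; first by rewrite /= inv.
    apply: (key hr0 hy hu Ryx Rux uK tK b).2.
    by apply/dvdnP; exists (r./2); move: er; rewrite -dvdn2 => /dvdnP[k ->]; lia.
  move: h4; rewrite big_split /= sum_nat_const card_ord.
  rewrite dvdn_addl //; apply/dvdnP; exists (n./2); move: en; rewrite -dvdn2 => /dvdnP[k ->]; lia.
Qed.
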